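(* Consider a generalized linear model with data $\mathcal{D}=(X,\mathbf{y})$, $X\in\mathbb{R}^{n\times(p+1)}$ (first column the intercept column of ones), log-likelihood $\ell(\beta_0,\boldsymbol{\beta};\mathcal{D})$ with $-\ell$ convex in $(\beta_0,\boldsymbol{\beta})$, $m$ mandatory predictors (columns $1,\dots,m$), and fix $\lambda\ge 0$. For $\mathbf{t}=(t_1,\dots,t_{p-m})\in[0,1]^{p-m}$ let $T_{\mathbf{t}}=\mathrm{diag}(1,\dots,1,t_1,\dots,t_{p-m})\in\mathbb{R}^{p\times p}$ (with $m$ leading ones) and $\Gamma_{\mathbf{t}}=\sqrt{I-T_{\mathbf{t}}^2}$ (elementwise square root of the diagonal). For $\delta>0$ define $$h_{\delta,\lambda}(\mathbf{t},\beta_0,\boldsymbol{\beta})=-\tfrac1n\ell(\beta_0,T_{\mathbf{t}}\boldsymbol{\beta};\mathcal{D})+\lambda\|\boldsymbol{\beta}\|_2^2+\delta\|\Gamma_{\mathbf{t}}\boldsymbol{\beta}\|_2^2,\qquad f_{\delta,\lambda}(\mathbf{t})=\min_{\beta_0\in\mathbb{R},\,\boldsymbol{\beta}\in\mathbb{R}^p}h_{\delta,\lambda}(\mathbf{t},\beta_0,\boldsymbol{\beta}).$$ Then for every fixed $\mathbf{t}\in(0,1)^{p-m}$, the map $\delta\mapsto f_{\delta,\lambda}(\mathbf{t})$ is monotone non-decreasing and continuous on $\delta>0$.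
   Context: $\ell(\beta_0,\boldsymbol{\beta};\mathcal{D})$ denotes the log-likelihood of the GLM, which depends on the coefficients through the linear predictors $\beta_0+\mathbf{x}_i^\top\boldsymbol{\beta}$, $i=1,\dots,n$. The value function $f_{\delta,\lambda}(\mathbf{t})$ is the minimum (assumed attained) of the inner objective over the coefficients. *)

(* Defs.v *)
From HB Require Import structures.
From mathcomp Require Import all_boot all_order all_algebra.
From mathcomp Require Import all_classical all_reals all_analysis.
Set Implicit Arguments. Unset Strict Implicit. Unset Printing Implicit Defensive.
Import Order.TTheory GRing.Theory Num.Theory.
Local Open Scope ring_scope.
Local Open Scope classical_set_scope.

Section GLM.
Variable R : realType.

(* Log-likelihood of a GLM, as a function of the coefficients through the
   linear predictors  eta_i = b0 + x_i^T b :  ell(b0,b) = L(b0*1 + X b). *)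
Definition glm_loglik (n p : nat) (L : 'cV[R]_n -> R) (X : 'M[R]_(n, p))
  (b0 : R) (b : 'cV[R]_p) : R := L (const_mx b0 + X *m b).

(* Diagonal of T_t = diag(1,...,1 (m times), t_1,...,t_k), p = m + k. *)
Definition Tdiag (m k : nat) (t : 'cV[R]_k) (i : 'I_(m + k)) : R :=
  match fintype.split i with inl _ => 1 | inr j => t j 0 end.

Definition Tmul (m k : nat) (t : 'cV[R]_k) (b : 'cV[R]_(m + k)) : 'cV[R]_(m + k) :=
  \col_i (Tdiag (m:=m) t i * b i 0).

Definition Gmul (m k : nat) (t : 'cV[R]_k) (b : 'cV[R]_(m + k)) : 'cV[R]_(m + k) :=
  \col_i (Num.sqrt (1 - Tdiag (m:=m) t i ^+ 2) * b i 0).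

Definition sqnorm (q : nat) (v : 'cV[R]_q) : R := \sum_i v i 0 ^+ 2.

Definition hobj (n m k : nat) (L : 'cV[R]_n -> R) (X : 'M[R]_(n, m + k))
  (lam delta : R) (t : 'cV[R]_k) (b0 : R) (b : 'cV[R]_(m + k)) : R :=
  - (n%:R)^-1 * glm_loglik L X b0 (Tmul (m:=m) t b) + lam * sqnorm b
  + delta * sqnorm (Gmul (m:=m) t b).

(* f_{delta,lambda}(t) = min over (b0,b) of h (taken as the infimum; the
   minimum is assumed attained in the theorem). *)
Definition fval (n m k : nat) (L : 'cV[R]_n -> R) (X : 'M[R]_(n, m + k))
  (lam delta : R) (t : 'cV[R]_k) : R :=
  inf [set hobj L X lam delta t bb.1 bb.2 | bb in [set: R * 'cV[R]_(m + k)]].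

End GLM.

(* Main.v *)
Require Import Defs.
From HB Require Import structures.
From mathcomp Require Import all_boot all_order all_algebra.
From mathcomp Require Import all_classical all_reals all_analysis.
From mathcomp Require Import ring lra.
Import Order.TTheory GRing.Theory Num.Theory.
Import numFieldNormedType.Exports.
Local Open Scope ring_scope.
Local Open Scope classical_set_scope.

Theorem proposition1 (R : realType) (n m k : nat) (L : 'cV[R]_n -> R)
  (X : 'M[R]_(n, m + k)) (lam : R)
  (hn : (0 < n)%N)
  (hconv : forall (a1 a2 : R) (b1 b2 : 'cV[R]_(m + k)) (s : R), 0 <= s -> s <= 1 ->
     - glm_loglik L X (s * a1 + (1 - s) * a2) (s *: b1 + (1 - s) *: b2)
     <= s * (- glm_loglik L X a1 b1) + (1 - s) * (- glm_loglik L X a2 b2))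
  (hlam : 0 <= lam)
  (t : 'cV[R]_k) (ht : forall j, 0 < t j 0 < 1)
  (hmin : forall delta : R, 0 < delta ->
     exists (b0 : R) (b : 'cV[R]_(m + k)), forall (c0 : R) (c : 'cV[R]_(m + k)),
       hobj L X lam delta t b0 b <= hobj L X lam delta t c0 c) :
  (forall d1 d2 : R, 0 < d1 -> d1 <= d2 -> fval L X lam d1 t <= fval L X lam d2 t)
  /\ {within [set d : R | 0 < d], continuous ((fun d : R => fval L X lam d t) : R -> R)}.
Proof.
set g := fun b : 'cV[R]_(m + k) => sqnorm (Gmul (m:=m) t b).
have hlin : forall d d' b0 b, hobj L X lam d t b0 b
    = hobj L X lam d' t b0 b + (d - d') * g b.
  by move=> d d' b0 b; rewrite /hobj /g; ring.
have g0 : forall b, 0 <= g b.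
  by move=> b; rewrite /g /sqnorm; apply: sumr_ge0 => i _; exact: sqr_ge0.
have fmin : forall d b0 b, (forall c0 c, hobj L X lam d t b0 b <= hobj L X lam d t c0 c) ->
    fval L X lam d t = hobj L X lam d t b0 b.
  move=> d b0 b hb; rewrite /fval; apply/le_anti/andP; split.
    apply: ge_inf; last by exists (b0, b).
    by exists (hobj L X lam d t b0 b) => y [[c0 c] _ <-]; exact: hb.
  apply: lb_le_inf; first by exists (hobj L X lam d t b0 b); exists (b0, b).
  by move=> y [[c0 c] _ <-]; exact: hb.
have key : forall d1 d2, 0 < d1 -> d1 <= d2 ->
   forall b1 b1' b2 b2',
   (forall c0 c, hobj L X lam d1 t b1 b1' <= hobj L X lam d1 t c0 c) ->
   (forall c0 c, hobj L X lam d2 t b2 b2' <= hobj L X lam d2 t c0 c) ->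
   fval L X lam d2 t - fval L X lam d1 t <= (d2 - d1) * g b1' /\
   (d2 - d1) * g b2' <= fval L X lam d2 t - fval L X lam d1 t.
  move=> d1 d2 h1 h12 b1 b1' b2 b2' m1 m2.
  rewrite (fmin _ _ _ m1) (fmin _ _ _ m2); split.
    have := m2 b1 b1'; rewrite (hlin d2 d1 b1 b1'); lra.
  have := m1 b2 b2'; rewrite (hlin d1 d2 b2 b2'); lra.
have mono : forall d1 d2 : R, 0 < d1 -> d1 <= d2 -> fval L X lam d1 t <= fval L X lam d2 t.
  move=> d1 d2 h1 h12.
  have [b1 [b1' m1]] := hmin d1 h1.
  have [b2 [b2' m2]] := hmin d2 (lt_le_trans h1 h12).
  have [_ H] := key d1 d2 h1 h12 b1 b1' b2 b2' m1 m2.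
  have := g0 b2'. nra.
split => //.
apply: continuous_in_subspaceT => dl; rewrite inE /= => hd.
have [b0 [b m0]] := hmin dl hd.
have hd2 : 0 < dl / 2 by lra.
set D := fval L X lam dl t - fval L X lam (dl / 2) t.
have D0 : 0 <= D by rewrite /D subr_ge0; apply: mono => //; lra.
set C := g b + 4 * D / dl + 1.
have C0 : 0 < C.
  rewrite /C; have := g0 b; have : 0 <= 4 * D / dl by apply: divr_ge0 => //; lra.
  lra.
apply/cvgrPdist_le => eps heps.
have epsC : 0 < eps / C by apply: divr_gt0.
set r := Num.min (dl / 4) (eps / C).
have r0 : 0 < r by rewrite lt_min; apply/andP; split => //; lra.
have rd : r <= dl / 4 by rewrite ge_min lexx.
have rC : r * C <= eps.
  have : r <= eps / C by rewrite ge_min lexx orbT.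
  by rewrite ler_pdivlMr.
exists r => //= x /= hx.
move: hx; rewrite ltr_norml => /andP [hx1 hx2].
have xpos : 0 < x by lra.
have [bx [bx' mx]] := hmin x xpos.
have gC : g b <= C.
  rewrite /C; have : 0 <= 4 * D / dl by apply: divr_ge0 => //; lra.
  lra.
rewrite ler_norml; apply/andP.
case: (lerP dl x) => hdx.
  have [H1 _] := key dl x hd hdx b0 b bx bx' m0 mx.
  have : 0 <= fval L X lam x t - fval L X lam dl t by rewrite subr_ge0; exact: mono.
  have : (x - dl) * g b <= r * C by apply: ler_pM; [lra | exact: g0 | lra | exact: gC].
  move=> *; split; lra.
have [bh [bh' mh]] := hmin (dl / 2) hd2.
have [H1 _] := key x dl xpos (ltW hdx) bx bx' b0 b mx m0.
have hx3 : dl / 2 <= x by lra.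
have [_ H2] := key (dl / 2) x hd2 hx3 bh bh' bx bx' mh mx.
have H3 : fval L X lam x t <= fval L X lam dl t by apply: mono => //; lra.
have H4 : (x - dl / 2) * g bx' <= D by rewrite /D; lra.
have H5 : g bx' * (dl / 4) <= D.
  apply: le_trans H4; rewrite mulrC; apply: ler_wpM2r; [exact: g0 | lra].
have gC' : g bx' <= C.
  have : g bx' <= 4 * D / dl.
    rewrite ler_pdivlMr //; lra.
  rewrite /C; have := g0 b; lra.
have : (dl - x) * g bx' <= r * C by apply: ler_pM; [lra | exact: g0 | lra | exact: gC'].
move=> *; split; lra.
Qed.
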